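(* Let $\mathbf L\in\mathbb R^{n\times n}$ be positive semidefinite, let $\mathcal D$, $\mathbf W$ be a dictionary and positive weights, $r\geq 1$, $\alpha>0$, and let $l_i$, $\widehat{\mathbf L}$, $\tilde s$ be as in the context. Let $t\geq 0$ and let $\sigma=(\sigma_1,\dots,\sigma_t)\in[n]^t$ be any sequence with $l_{\sigma_j}>0$ for all $j$, and define the $t\times t$ matrix $\widetilde{\mathbf L}_\sigma$ by $[\widetilde{\mathbf L}_\sigma]_{ab}=\frac{\mathbf L_{\sigma_a\sigma_b}}{r\sqrt{l_{\sigma_a}l_{\sigma_b}}}$. Then $$\frac{e^{\tilde s}\det(\mathbf I+\alpha\widetilde{\mathbf L}_\sigma)}{e^{t/r}\det(\mathbf I+\alpha\widehat{\mathbf L})}\leq 1.$$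
   Context: A dictionary is a sequence $\mathcal D=(\mathcal D_1,\dots,\mathcal D_m)$ of elements of $[n]=\{1,\dots,n\}$, with a diagonal matrix $\mathbf W\in\mathbb R^{m\times m}$ of strictly positive weights. For index sequences $A,B$, $\mathbf L_{A,B}$ denotes the submatrix with rows indexed by $A$ and columns by $B$ (with repetitions allowed). The approximate marginals are $$l_i=\alpha\Big(\mathbf L_{ii}-\alpha\,\mathbf L_{\{i\},\mathcal D}\big(\alpha\mathbf L_{\mathcal D,\mathcal D}+\mathbf W^{-1}\big)^{-1}\mathbf L_{\mathcal D,\{i\}}\Big),\qquad i\in[n].$$ Further, $\widehat{\mathbf L}=\mathbf W^{1/2}\mathbf L_{\mathcal D,\mathcal D}\mathbf W^{1/2}\in\mathbb R^{m\times m}$ and $\tilde s=d_{\mathrm{eff}}(\alpha\widehat{\mathbf L})=\mathrm{tr}\big(\alpha\widehat{\mathbf L}(\alpha\widehat{\mathbf L}+\mathbf I)^{-1}\big)$. The determinant of a $0\times0$ matrix is $1$. *)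

(* Defs.v *)
From HB Require Import structures.
From mathcomp Require Import all_boot all_order all_algebra.
From mathcomp Require Import reals.
From mathcomp Require Import sequences.
From mathcomp.analysis Require Import exp.
Set Implicit Arguments. Unset Strict Implicit. Unset Printing Implicit Defensive.
Import Order.TTheory GRing.Theory Num.Theory.
Local Open Scope ring_scope.

Section Defs.
Variable R : realType.

Definition psd n (L : 'M[R]_n) : Prop :=
  L^T = L /\ forall x : 'cV[R]_n, 0 <= (x^T *m L *m x) 0 0.

(* L_{A,B} for index sequences A : 'I_p -> [n], B : 'I_q -> [n] (repetitions allowed) *)
Definition subL n p q (L : 'M[R]_n) (A : 'I_p -> 'I_n) (B : 'I_q -> 'I_n)
  : 'M[R]_(p, q) := \matrix_(a, b) L (A a) (B b).

(* approximate marginal l_i; W = diag_mx w, so W^{-1} = diag of w^-1 *)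
Definition approx_marg n m (L : 'M[R]_n) (D : 'I_m -> 'I_n) (w : 'I_m -> R)
  (alpha : R) (i : 'I_n) : R :=
  alpha * (L i i - alpha *
    (subL L (fun _ : 'I_1 => i) D
       *m invmx (alpha *: subL L D D + diag_mx (\row_k (w k)^-1))
       *m subL L D (fun _ : 'I_1 => i)) 0 0).

Definition Lhat n m (L : 'M[R]_n) (D : 'I_m -> 'I_n) (w : 'I_m -> R) : 'M[R]_m :=
  diag_mx (\row_k Num.sqrt (w k)) *m subL L D D *m diag_mx (\row_k Num.sqrt (w k)).

Definition deff m (A : 'M[R]_m) : R := \tr (A *m invmx (A + 1%:M)).

Definition Ltilde n m t (L : 'M[R]_n) (D : 'I_m -> 'I_n) (w : 'I_m -> R)
  (alpha r : R) (sigma : 'I_t -> 'I_n) : 'M[R]_t :=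
  \matrix_(a, b) (L (sigma a) (sigma b) /
     (r * Num.sqrt (approx_marg L D w alpha (sigma a) *
                    approx_marg L D w alpha (sigma b)))).

End Defs.

(* Main.v *)
Require Import Defs.
From HB Require Import structures.
From mathcomp Require Import all_boot all_order all_algebra.
From mathcomp Require Import reals sequences.
From mathcomp.analysis Require Import exp.
From mathcomp Require Import ring lra.
Set Implicit Arguments. Unset Strict Implicit. Unset Printing Implicit Defensive.
Import Order.TTheory GRing.Theory Num.Theory.
Local Open Scope ring_scope.

Section S.
Variable R : realType.

Lemma qform_block k (a : R) (v : 'cV[R]_k) (N : 'M_k) (g : R) (u : 'cV_k) :
  ((col_mx (g%:M : 'M_1) u)^T *m block_mx (a%:M : 'M_1) v^T v N *m col_mx (g%:M) u) 0 0
  = g * g * a + 2 * g * (u^T *m v) 0 0 + (u^T *m N *m u) 0 0.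
Proof.
rewrite tr_col_mx mul_row_block mul_row_col !mulmxDl !mxE.
rewrite tr_scalar_mx !mul_scalar_mx !big_ord1 !mxE /=.
have -> : \sum_(j < k) (g *: v^T) 0 j * u j 0 = g * \sum_(j < k) u^T 0 j * v j 0.
  rewrite mulr_sumr; apply: eq_bigr => j _; rewrite !mxE; ring.
rewrite !mulr1n; ring.
Qed.

Lemma mx11_mul (A B : 'M[R]_1) : (A *m B) 0 0 = A 0 0 * B 0 0.
Proof. by rewrite mxE big_ord1. Qed.

Lemma trZ p q (c : R) (A : 'M[R]_(p, q)) : (c *: A)^T = c *: A^T.
Proof. by apply/matrixP => i j; rewrite !mxE. Qed.

Lemma qform_sym k (u v : 'cV[R]_k) : (v^T *m u) 0 0 = (u^T *m v) 0 0.
Proof. by rewrite -[v^T *m u]trmxK trmx_mul trmxK mxE. Qed.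

Lemma chol k (M : 'M[R]_k) : psd M -> exists E : 'M_k, is_trig_mx E /\ M = E *m E^T.
Proof.
elim: k M => [|k IH] M [Msym Mq].
  exists 0; split; first exact: mx0_is_trig.
  by apply/matrixP => -[].
pose M' : 'M[R]_(1 + k) := M.
pose a : R := ulsubmx M' 0 0.
pose v : 'cV[R]_k := dlsubmx M'.
pose N : 'M[R]_k := drsubmx M'.
have eM : M' = block_mx (a%:M : 'M_1) v^T v N.
  rewrite -[M' in LHS]submxK -mx11_scalar; congr block_mx.
  by rewrite /v trmx_dlsub Msym.
have Nsym : N^T = N by rewrite /N trmx_drsub Msym.
have q : forall g (u : 'cV_k),
    0 <= g * g * a + 2 * g * (u^T *m v) 0 0 + (u^T *m N *m u) 0 0.
  move=> g u; rewrite -qform_block -eM; exact: Mq.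
have a0 : 0 <= a.
  by have := q 1 0; rewrite !trmx0 !mul0mx !mxE !mulr0 !addr0 !mul1r.
have qN : forall u : 'cV_k, 0 <= (u^T *m N *m u) 0 0.
  by move=> u; have := q 0 u; rewrite !mulr0 !mul0r !add0r.
pose N' := N - a^-1 *: (v *m v^T).
have vv : forall u : 'cV_k, (u^T *m (v *m v^T) *m u) 0 0 = (u^T *m v) 0 0 ^+ 2.
  by move=> u; rewrite mulmxA -mulmxA mx11_mul qform_sym expr2.
have v0 : a = 0 -> v = 0.
  move=> a0'.
  have b0 : forall u : 'cV_k, (u^T *m v) 0 0 = 0.
    move=> u; apply/eqP; apply: contraT => bn0.
    have := q (- ((u^T *m N *m u) 0 0 + 1) / (2 * (u^T *m v) 0 0)) u.
    rewrite a0' mulr0 add0r.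
    have -> : 2 * (- ((u^T *m N *m u) 0 0 + 1) / (2 * (u^T *m v) 0 0)) * (u^T *m v) 0 0
       = - ((u^T *m N *m u) 0 0 + 1) by field.
    by rewrite opprD addrAC addNr add0r oppr_ge0 ler10.
  have := b0 v; rewrite mxE => /psumr_eq0P H.
  suff vi : forall i, v i 0 = 0 by apply/matrixP => i j; rewrite (ord1 j) vi mxE.
  move=> i; apply/eqP.
  have := H (fun i _ => ltac:(rewrite mxE; rewrite -expr2; exact: sqr_ge0)) i isT.
  by rewrite mxE => /eqP; rewrite mulf_eq0 orbb.
have N'psd : psd N'.
  split.
    by rewrite /N' linearB /= Nsym trZ trmx_mul trmxK.
  move=> u; rewrite /N' mulmxBr mulmxBl -scalemxAr -scalemxAl [X in 0 <= X]mxE.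
  rewrite [X in _ + X]mxE [X in _ - X]mxE vv.
  have [->|apos] := eqVneq a 0; first by rewrite invr0 mul0r subr0 qN.
  have := q (- (u^T *m v) 0 0 / a) u.
  suff -> : - (u^T *m v) 0 0 / a * (- (u^T *m v) 0 0 / a) * a +
    2 * (- (u^T *m v) 0 0 / a) * (u^T *m v) 0 0 + (u^T *m N *m u) 0 0 =
    (u^T *m N *m u) 0 0 - a^-1 * (u^T *m v) 0 0 ^+ 2 by [].
  by field.
have [F [Ftrig eF]] := IH N' N'psd.
pose s := Num.sqrt a.
pose E : 'M[R]_(1 + k) := block_mx (s%:M : 'M_1) 0 ((s^-1) *: v) F.
exists E; split.
  by rewrite /E (@is_trig_block_mx _ 1 k 1 k) // eqxx scalar_mx_is_trig Ftrig.
have ss : s * s = a by rewrite -expr2 sqr_sqrtr.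
have sc : s * s^-1 *: v = v.
  have [a0'|an0] := eqVneq a 0; first by rewrite v0 // scaler0.
  rewrite divff ?scale1r //; apply: contra an0 => /eqP s0; by rewrite -ss s0 mulr0.
change (M' = E *m E^T).
rewrite eM /E tr_block_mx mulmx_block !trmx0 !mulmx0 !mul0mx !addr0 tr_scalar_mx.
rewrite -scalar_mxM ss trZ mul_scalar_mx scalerA.
have sc' : s * s^-1 *: v^T = v^T by rewrite -trZ sc.
rewrite sc' mul_mx_scalar scalerA sc.
rewrite -scalemxAl -scalemxAr scalerA -invfM ss -eF /N'.
by rewrite addrC subrK.
Qed.

Lemma det_le_exp k (M : 'M[R]_k) : psd M -> \det M <= expR (\tr M - k%:R).
Proof.
move=> /chol [E [Et ->]].
rewrite det_mulmx det_tr det_trig // -expr2 -prodrXl.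
have -> : \tr (E *m E^T) = \sum_i \sum_j E i j ^+ 2.
  rewrite /mxtrace; apply: eq_bigr => i _; rewrite mxE; apply: eq_bigr => j _.
  by rewrite mxE expr2.
apply: (@le_trans _ _ (expR (\sum_i (E i i ^+ 2 - 1)))); last first.
  rewrite ler_expR sumrB.
  have -> : \sum_(i < k) (1 : R) = k%:R by rewrite sumr_const card_ord.
  rewrite lerD2r.
  apply: ler_sum => i _; rewrite (bigD1 i) //= lerDl.
  by apply: sumr_ge0 => j _; exact: sqr_ge0.
rewrite expR_sum; apply: ler_prod => i _; rewrite sqr_ge0 /=.
by have := expR_ge1Dx (E i i ^+ 2 - 1); rewrite addrC subrK.
Qed.

Lemma sylvester p q (A : 'M[R]_(p, q)) (C : 'M_(q, p)) :
  \det (1%:M + A *m C) = \det (1%:M + C *m A).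
Proof.
pose X := block_mx (1%:M : 'M_p) (- A) C (1%:M : 'M_q).
have e1 : X *m block_mx 1%:M A 0 1%:M = block_mx 1%:M 0 C (1%:M + C *m A).
  rewrite mulmx_block !mulmx1 !mul1mx !mulmx0 !addr0.
  by rewrite subrr addrC.
have e2 : X *m block_mx 1%:M 0 (- C) 1%:M = block_mx (1%:M + A *m C) (- A) 0 1%:M.
  rewrite mulmx_block !mulmx1 !mul1mx !mulmx0 ?addr0 ?mulNmx ?mulmxN ?opprK.
  by rewrite subrr !add0r.
have := congr1 determinant e1; have := congr1 determinant e2.
rewrite !det_mulmx det_ublock det_lblock det_ublock det_lblock !det1 ?mulr1 ?mul1r.
by move=> -> ->.
Qed.

Lemma quad_diag p (u : 'cV[R]_p) (d : 'rV_p) :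
  (forall j, 0 <= d 0 j) -> 0 <= (u^T *m diag_mx d *m u) 0 0.
Proof.
move=> d0; rewrite mxE; apply: sumr_ge0 => j _.
rewrite mul_mx_diag !mxE [X in X * _]mulrC -mulrA mulr_ge0 //.
by rewrite -expr2 sqr_ge0.
Qed.

Lemma quad_id p (u : 'cV[R]_p) : 0 <= (u^T *m u) 0 0.
Proof.
have := quad_diag u (d := const_mx 1) (fun j => ltac:(by rewrite mxE)).
by rewrite diag_const_mx mulmx1.
Qed.

Lemma psd_form p q (c : R) (P : 'M[R]_(p, q)) (d : 'rV_q) :
  0 <= c -> (forall j, 0 <= d 0 j) -> psd (1%:M + c *: (P *m diag_mx d *m P^T)).
Proof.
move=> c0 d0; split.
  by rewrite linearD /= trmx1 trZ !trmx_mul trmxK tr_diag_mx mulmxA.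
move=> u; rewrite mulmxDr mulmxDl mulmx1 -scalemxAr -scalemxAl.
rewrite [X in 0 <= X]mxE [X in _ + X]mxE addr_ge0 ?quad_id // mulr_ge0 //.
have -> : u^T *m (P *m diag_mx d *m P^T) *m u = (P^T *m u)^T *m diag_mx d *m (P^T *m u).
  by rewrite trmx_mul trmxK !mulmxA.
exact: quad_diag.
Qed.

Lemma psd_gram p q (B : 'M[R]_(p, q)) : psd (B^T *m B).
Proof.
split; first by rewrite trmx_mul trmxK.
move=> u; have -> : u^T *m (B^T *m B) *m u = (B *m u)^T *m (B *m u).
  by rewrite trmx_mul !mulmxA.
exact: quad_id.
Qed.

Lemma push_trace p q (F : 'M[R]_(p, q)) (Gm : 'M_(q, p)) :
  (1%:M + Gm *m F) \in unitmx ->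
  \tr (F *m Gm *m invmx (F *m Gm + 1%:M)) = q%:R - \tr (invmx (1%:M + Gm *m F)).
Proof.
move=> Zu.
have Au : F *m Gm + 1%:M \in unitmx by rewrite addrC unitmxE sylvester -unitmxE.
have e : Gm *m invmx (F *m Gm + 1%:M) = invmx (1%:M + Gm *m F) *m Gm.
  have e0 : (1%:M + Gm *m F) *m Gm = Gm *m (F *m Gm + 1%:M).
    by rewrite mulmxDl mulmxDr mul1mx mulmx1 addrC mulmxA.
  by rewrite -[LHS](mulKmx Zu) [(1%:M + Gm *m F) *m (Gm *m _)]mulmxA e0 (mulmxK Au).
rewrite -mulmxA e mulmxA mxtrace_mulC mulmxA.
have -> : Gm *m F *m invmx (1%:M + Gm *m F) = 1%:M - invmx (1%:M + Gm *m F).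
  have -> : 1%:M - invmx (1%:M + Gm *m F) = (1%:M + Gm *m F - 1%:M) *m invmx (1%:M + Gm *m F).
    by rewrite mulmxBl mulmxV // mul1mx.
  by congr (_ *m _); rewrite addrC addKr.
by rewrite linearB /= mxtrace1.
Qed.

Lemma aux_comm (a z r y x : R) : a * (z * (r^-1 * (y^-1 / x))) = a / r * (y^-1 * z / x).
Proof. by ring. Qed.

Lemma aux2 (a r : R) t : a != 0 -> a / r * (a^-1 *+ t) = t%:R / r.
Proof. move=> an0; rewrite -[a^-1 *+ t]mulr_natl. by rewrite mulrCA mulrAC mulfV // mul1r. Qed.

Lemma aux3 (a b : R) : a * b * a = a * a * b.
Proof. by ring. Qed.

Lemma final_arith (dz dy du ty n tr : R) : 0 < dz -> dz * dy = 1 ->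
  dy * du <= expR (ty + tr - n) -> expR (n - ty) * du <= expR tr * dz.
Proof.
move=> dz0 e h.
have -> : du = dz * (dy * du) by rewrite mulrA e mul1r.
rewrite mulrA; apply: le_trans (ler_wpM2l _ h) _.
  by rewrite mulr_ge0 ?expR_ge0 ?ltW.
rewrite mulrC mulrA -expRD.
have -> : ty + tr - n + (n - ty) = tr by ring.
by rewrite mulrC.
Qed.

Lemma psd_congr p (M E : 'M[R]_p) : psd M -> psd (E^T *m M *m E).
Proof.
move=> [Ms Mq]; split; first by rewrite !trmx_mul trmxK Ms mulmxA.
move=> u; have := Mq (E *m u); by rewrite trmx_mul !mulmxA.
Qed.

Lemma psd_inv p (Z Y : 'M[R]_p) : psd Z -> Z *m Y = 1%:M -> psd Y.
Proof.
move=> [Zs Zq] ZY.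
have YZ := mulmx1C ZY.
have [Zu Yu] := mulmx1_unit ZY.
have eY : Y = invmx Z by rewrite -[Y]mul1mx -(mulVmx Zu) -mulmxA ZY mulmx1.
have Ys : Y^T = Y by rewrite eY trmx_inv Zs.
split => // u; have := Zq (Y *m u).
by rewrite trmx_mul Ys -!mulmxA [Z *m (Y *m u)]mulmxA ZY mul1mx.
Qed.

Lemma entryD p q (A B : 'M[R]_(p, q)) i j : (A + B) i j = A i j + B i j.
Proof. by rewrite mxE. Qed.
Lemma entryB p q (A B : 'M[R]_(p, q)) i j : (A - B) i j = A i j - B i j.
Proof. by rewrite !mxE. Qed.
Lemma entryZ p q (c : R) (A : 'M[R]_(p, q)) i j : (c *: A) i j = c * A i j.
Proof. by rewrite mxE. Qed.

Definition colsel n p (G : 'M[R]_n) (A : 'I_p -> 'I_n) : 'M[R]_(n, p) :=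
  \matrix_(x, a) G x (A a).

Lemma subLE n p q (G : 'M[R]_n) (A : 'I_p -> 'I_n) (B : 'I_q -> 'I_n) :
  subL (G^T *m G) A B = (colsel G A)^T *m colsel G B.
Proof.
apply/matrixP => a b; rewrite !mxE; apply: eq_bigr => x _; by rewrite !mxE.
Qed.

Lemma colsel_quad n p (G Y : 'M[R]_n) (A : 'I_p -> 'I_n) (j : 'I_p) :
  ((colsel G A)^T *m Y *m colsel G A) j j =
  ((colsel G (fun _ : 'I_1 => A j))^T *m Y *m colsel G (fun _ : 'I_1 => A j)) 0 0.
Proof.
rewrite !mxE; apply: eq_bigr => y _; rewrite !mxE; congr (_ * _).
by apply: eq_bigr => x _; rewrite !mxE.
Qed.

Lemma unit_X m (P : 'M[R]_m) (w : 'I_m -> R) (alpha : R) :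
  psd P -> (forall k, 0 < w k) -> 0 < alpha ->
  alpha *: P + diag_mx (\row_k (w k)^-1) \in unitmx.
Proof.
move=> [Ps Pq] wp ap; rewrite unitmxE unitfE; apply/negP => /det0P [v vn0 vX].
have : (v *m (alpha *: P + diag_mx (\row_k (w k)^-1)) *m v^T) 0 0 = 0.
  by rewrite vX mul0mx mxE.
rewrite mulmxDr mulmxDl -scalemxAr -scalemxAl entryD entryZ.
have h1 : 0 <= (v *m P *m v^T) 0 0 by have := Pq v^T; rewrite trmxK.
have h2 : 0 <= (v *m diag_mx (\row_k (w k)^-1) *m v^T) 0 0.
  have := quad_diag v^T (d := \row_k (w k)^-1) (fun j => ltac:(by rewrite mxE invr_ge0 ltW)).
  by rewrite trmxK.
move/eqP; rewrite (paddr_eq0 (mulr_ge0 (ltW ap) h1) h2) mulf_eq0 gt_eqF //= => /andP [_ /eqP h3].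
apply: (negP vn0); apply/eqP/matrixP => i j; rewrite (ord1 i) mxE.
move: h3; rewrite mxE => /psumr_eq0P H.
have := H (fun k _ => ltac:(rewrite mul_mx_diag !mxE -mulrA mulrC -mulrA; apply: mulr_ge0;
   [by rewrite invr_ge0 ltW | by rewrite -expr2 sqr_ge0])) j isT.
rewrite mul_mx_diag !mxE => /eqP; rewrite -mulrA mulrC -mulrA mulf_eq0 invr_eq0 gt_eqF //=.
by rewrite mulf_eq0 orbb => /eqP.
Qed.
End S.

Unset Implicit Arguments.

Theorem mainTheorem6 (R : realType) (n m : nat) (L : 'M[R]_n)
  (D : 'I_m -> 'I_n) (w : 'I_m -> R) (r alpha : R) (t : nat)
  (sigma : 'I_t -> 'I_n) :
  psd L ->
  (forall k, 0 < w k) ->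
  1 <= r -> 0 < alpha ->
  (forall j, 0 < approx_marg L D w alpha (sigma j)) ->
  expR (deff (alpha *: Lhat L D w)) * \det (1%:M + alpha *: Ltilde L D w alpha r sigma)
    / (expR (t%:R / r) * \det (1%:M + alpha *: Lhat L D w)) <= 1.
Proof.
move=> Lpsd wpos r1 apos lpos.
have r0 : 0 < r by apply: lt_le_trans r1.
have [E [_ eL]] := chol Lpsd.
pose G := E^T.
have eLG : L = G^T *m G by rewrite /G trmxK.
pose BD := colsel G D.
pose Bs := colsel G sigma.
pose bc i := colsel G (fun _ : 'I_1 => i).
pose Wm := diag_mx (\row_k w k).
pose X := alpha *: (BD^T *m BD) + diag_mx (\row_k (w k)^-1).
have Xu : X \in unitmx.
  by apply: unit_X => //; exact: psd_gram.
pose Z := 1%:M + alpha *: (BD *m Wm *m BD^T).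
pose Y := 1%:M - alpha *: (BD *m invmx X *m BD^T).
have WX : Wm *m X = 1%:M + alpha *: (Wm *m (BD^T *m BD)).
  rewrite /X mulmxDr -scalemxAr addrC mulmx_diag; congr (_ + _).
  rewrite -diag_const_mx; congr diag_mx; apply/matrixP => i j.
  by rewrite !mxE divff // gt_eqF.
have ZBD : Z *m BD = BD *m (Wm *m X).
  rewrite WX /Z mulmxDl mul1mx mulmxDr mulmx1 -!scalemxAl -!scalemxAr !mulmxA.
  done.
have ZY : Z *m Y = 1%:M.
  rewrite /Y mulmxBr mulmx1 -scalemxAr !mulmxA ZBD.
  rewrite -[BD *m (Wm *m X) *m invmx X](mulmxA BD) (mulmxK Xu).
  by rewrite /Z addrK.
have lE : forall i, approx_marg L D w alpha i = alpha * ((bc i)^T *m Y *m bc i) 0 0.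
  move=> i.
  have Lii : L i i = ((bc i)^T *m bc i) 0 0.
    by have := subLE G (fun _ : 'I_1 => i) (fun _ : 'I_1 => i); rewrite -eLG => /matrixP/(_ 0 0); rewrite mxE.
  rewrite /approx_marg Lii eLG !subLE -/BD -/(bc i) -/X.
  rewrite /Y mulmxBr mulmxBl mulmx1 entryB -scalemxAr -scalemxAl entryZ !mulmxA.
  done.
have [Zu Yu] := mulmx1_unit ZY.
have eY : Y = invmx Z by rewrite -[Y]mul1mx -(mulVmx Zu) -mulmxA ZY mulmx1.
have Zpsd : psd Z by apply: psd_form => [|j]; [exact: ltW | rewrite mxE ltW].
have Ypsd : psd Y := psd_inv Zpsd ZY.
pose Wh := diag_mx (\row_k Num.sqrt (w k)).
have WhWh : BD *m Wh *m (Wh *m BD^T) = BD *m Wm *m BD^T.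
  rewrite !mulmxA -(mulmxA BD) mulmx_diag; congr (_ *m _ *m _); congr diag_mx.
  by apply/matrixP => i j; rewrite !mxE -expr2 sqr_sqrtr // ltW.
have eLh : alpha *: Lhat L D w = (Wh *m BD^T) *m (alpha *: (BD *m Wh)).
  by rewrite /Lhat eLG subLE -/BD -scalemxAr !mulmxA.
have detLh : \det (1%:M + alpha *: Lhat L D w) = \det Z.
  by rewrite eLh sylvester -scalemxAl WhWh.
have deffE : deff (alpha *: Lhat L D w) = n%:R - \tr Y.
  by rewrite /deff eLh push_trace -scalemxAl WhWh ?eY //.
pose l j := approx_marg L D w alpha (sigma j).
pose Dl := diag_mx (\row_j (l j)^-1).
pose Vh := diag_mx (\row_j (Num.sqrt (l j))^-1).
pose U := (alpha / r) *: (Bs *m Dl *m Bs^T).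
have eLt : alpha *: Ltilde L D w alpha r sigma = (Vh *m Bs^T) *m ((alpha / r) *: (Bs *m Vh)).
  have -> : (Vh *m Bs^T) *m ((alpha / r) *: (Bs *m Vh)) =
      (alpha / r) *: (Vh *m subL L sigma sigma *m Vh).
    by rewrite eLG subLE -/Bs -scalemxAr !mulmxA.
  apply/matrixP => a b; rewrite entryZ mul_mx_diag mxE mul_diag_mx !mxE.
  have la := lpos a; have lb := lpos b.
  rewrite sqrtrM ?ltW //.
  have : Num.sqrt (l a) != 0 by rewrite gt_eqF // sqrtr_gt0.
  have : Num.sqrt (l b) != 0 by rewrite gt_eqF // sqrtr_gt0.
  rewrite /l => _ _.
  move: (Num.sqrt _) (Num.sqrt _) (L _ _) => x y z.
  by rewrite !invfM aux_comm.
have detLt : \det (1%:M + alpha *: Ltilde L D w alpha r sigma) = \det (1%:M + U).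
  rewrite eLt sylvester -scalemxAl -(mulmxA _ Vh) (mulmxA Vh) mulmx_diag !mulmxA /U.
  suff -> : (\row_j ((\row_j0 (Num.sqrt (l j0))^-1) 0 j * (\row_j0 (Num.sqrt (l j0))^-1) 0 j))
     = \row_j (l j)^-1 :> 'rV_t by [].
  apply/matrixP => i j; rewrite !mxE -invfM -expr2 sqr_sqrtr //.
  exact: ltW (lpos j).
have trYU : \tr (Y *m U) = t%:R / r.
  rewrite /U -scalemxAr mxtraceZ mulmxA mxtrace_mulC !mulmxA mul_mx_diag /mxtrace.
  have -> : \sum_i (\matrix_(i0, j) ((Bs^T *m Y *m Bs) i0 j * (\row_j (l j)^-1) 0 j)) i i
      = \sum_(i < t) alpha^-1.
    apply: eq_bigr => j _; rewrite mxE [(\row_j _) 0 _]mxE /Bs colsel_quad -/(bc _).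
    have := lpos j; rewrite /l lE => lp.
    rewrite invfM mulrCA divff ?mulr1 //.
    by rewrite gt_eqF // -(pmulr_rgt0 _ apos).
  by rewrite sumr_const card_ord aux2 // gt_eqF.
have [E2 [_ eY2]] := chol Ypsd.
pose M2 := E2^T *m (1%:M + U) *m E2.
have M2psd : psd M2.
  apply: psd_congr; apply: psd_form => [|j].
    by rewrite divr_ge0 // ltW.
  by rewrite mxE invr_ge0 ltW // lpos.
have H := det_le_exp M2psd.
have detM2 : \det M2 = \det Y * \det (1%:M + U).
  by rewrite /M2 !det_mulmx det_tr eY2 det_mulmx det_tr aux3.
have trM2 : \tr M2 = \tr Y + t%:R / r.
  by rewrite /M2 mxtrace_mulC mulmxA -eY2 mulmxDr mulmx1 mxtraceD trYU.
have detZY : \det Z * \det Y = 1 by rewrite -det_mulmx ZY det1.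
have dY0 : 0 <= \det Y by rewrite eY2 det_mulmx det_tr -expr2 sqr_ge0.
have dYn0 : \det Y != 0.
  by apply/eqP => h; move: detZY; rewrite h mulr0 => /eqP; rewrite eq_sym oner_eq0.
have dYp : 0 < \det Y by rewrite lt_def dYn0 dY0.
have dZ0 : 0 < \det Z by rewrite -(pmulr_lgt0 _ dYp) detZY ltr01.
rewrite deffE detLt detLh ler_pdivrMr ?mulr_gt0 ?expR_gt0 // mul1r.
apply: (final_arith (dy := \det Y)) => //.
by rewrite -detM2 -trM2.
Qed.
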